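(* Let $N \geq 1$ and let $\mu$ be the uniform probability measure on the discrete torus $\mathbb{Z}/(N\mathbb{Z})$. For every probability measure $\nu$ on $\mathbb{Z}/(N\mathbb{Z})$, $$H(\nu|\mu) \leq \sqrt{2}\, W_c(\nu,\mu)\sqrt{I(\nu|\mu)}.$$
   Context: The relative entropy is $H(\nu|\mu) = \sum_{x\in\mathbb{Z}/(N\mathbb{Z})}\nu(x)(\log\nu(x)+\log N)$ (with $0\log 0=0$). The Fisher information is $$I(\nu|\mu) = \sum_{x\in\mathbb{Z}/(N\mathbb{Z})}\big(\log\nu(x+1)-\log\nu(x)\big)\big(\nu(x+1)-\nu(x)\big),$$ (taking the value $+\infty$ if some term is infinite). The transport cost $W_c$ is defined by $$W_c(\nu,\mu)^2 = \inf_{X\sim\nu,\,Y\sim\mu}\mathbb{E}\big[d(X,Y)+d(X,Y)^2\big],$$ with $W_c \geq 0$, where the infimum is over all couplings of $X\sim\nu$ and $Y\sim\mu$, and $d$ is the graph distance on the cycle $\mathbb{Z}/(N\mathbb{Z})$. *)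

(* Defs.v *)
From HB Require Import structures.
From mathcomp Require Import all_boot all_order all_algebra.
From mathcomp Require Import all_classical all_reals all_analysis.
Set Implicit Arguments. Unset Strict Implicit. Unset Printing Implicit Defensive.
Import Order.TTheory GRing.Theory Num.Theory.
Local Open Scope ring_scope.

(* The discrete torus Z/(NZ) is represented by 'I_N (for N >= 1). *)

Lemma ord_pos (N : nat) (x : 'I_N) : (0 < N)%N.
Proof. by apply: leq_ltn_trans (ltn_ord x). Qed.

Definition tsucc (N : nat) (x : 'I_N) : 'I_N :=
  Ordinal (ltn_pmod (x.+1) (ord_pos x)).

Definition tdist (N : nat) (x y : 'I_N) : nat :=
  minn ((x + N - y) %% N) ((y + N - x) %% N).

Section Defs.
Variable R : realType.

Definition is_prob (N : nat) (nu : 'I_N -> R) : Prop :=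
  (forall x, 0 <= nu x) /\ \sum_(x < N) nu x = 1.

Definition unif (N : nat) : 'I_N -> R := fun _ => N%:R^-1.

(* relative entropy H(nu|mu) = sum nu(x) (log nu(x) + log N); ln 0 = 0 in
   MathComp-Analysis, so 0 log 0 = 0 *)
Definition rel_entropy (N : nat) (nu : 'I_N -> R) : R :=
  \sum_(x < N) nu x * (ln (nu x) + ln N%:R).

(* Fisher information, +oo if some term is infinite, i.e. if exactly one of
   nu(x), nu(x+1) vanishes; when both vanish the term is 0. *)
Definition fisher (N : nat) (nu : 'I_N -> R) : \bar R :=
  if [exists x : 'I_N, (nu x == 0) != (nu (tsucc x) == 0)] then +oo%E
  else (\sum_(x < N) (ln (nu (tsucc x)) - ln (nu x)) * (nu (tsucc x) - nu x))%:E.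

Definition is_coupling (N : nat) (nu mu : 'I_N -> R) (pi : 'I_N -> 'I_N -> R) : Prop :=
  (forall x y, 0 <= pi x y) /\
  (forall x, \sum_(y < N) pi x y = nu x) /\
  (forall y, \sum_(x < N) pi x y = mu y).

Definition Wc2 (N : nat) (nu mu : 'I_N -> R) : R :=
  inf [set c : R | exists pi, is_coupling nu mu pi /\
        c = \sum_(x < N) \sum_(y < N) pi x y * ((tdist x y)%:R + (tdist x y)%:R ^+ 2)].

Definition Wc (N : nat) (nu mu : 'I_N -> R) : R := Num.sqrt (Wc2 nu mu).

End Defs.

(* Main.v *)
Require Import Defs.
From HB Require Import structures.
From mathcomp Require Import all_boot all_order all_algebra.
From mathcomp Require Import all_classical all_reals all_analysis.
Import Order.TTheory GRing.Theory Num.Theory.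
From mathcomp Require Import ring lra.
Import numFieldNormedType.Exports.
Local Open Scope classical_set_scope.
Local Open Scope ring_scope.

Section RealLemmas.
Variable R : realType.

Lemma ln_ge_1m (t : R) : 0 < t -> 1 - t^-1 <= ln t.
Proof.
move=> t0.
have : -1 < t^-1 - 1 by have := invr_gt0 t; rewrite t0 => h; lra.
move=> /le_ln1Dx.
rewrite addrC subrK lnV ?posrE // => h. lra.
Qed.

Lemma ln_le_m1 (t : R) : 0 < t -> ln t <= t - 1.
Proof.
move=> t0.
have : -1 < t - 1 by lra.
by move=> /le_ln1Dx; rewrite addrC subrK.
Qed.

Lemma logmean_aux (t : R) : 1 <= t -> 2 * (t - 1) <= (t + 1) * ln t.
Proof.
move=> t1.
pose F : R -> R := (shift 1 * (@ln R)) - (2 \*: id).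
have FE : forall u, F u = (u + 1) * ln u - 2 * u by [].
have dF : forall x : R, 0 < x -> is_derive x 1 F (ln x - 1 + x^-1).
  move=> x x0.
  have h := is_deriveB (is_deriveM (is_derive_shift x 1 1) (is_derive1_ln x0))
                       (is_deriveZ 2 (is_derive_id x 1)).
  apply: is_derive_eq.
  rewrite /shift /= -[(x + 1) *: x^-1]/((x + 1) * x^-1) mulrDl divff ?gt_eqF //.
  rewrite [X in _ + X - _]mulr1 [X in _ - X = _]mulr1 mul1r. lra.
have [->|t1'] := eqVneq t 1. by rewrite ln1; lra.
have lt1 : 1 < t by rewrite lt_neqAle eq_sym t1' t1.
have dF' : forall x : R, x \in `]1, t[ -> is_derive x 1 F (ln x - 1 + x^-1).
  move=> x; rewrite in_itv /= => /andP[x1 _]; apply: dF; lra.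
have cF : {within [set` `[1, t]%R], continuous F}.
  apply: derivable_within_continuous => x.
  rewrite in_itv /= => /andP[x1 _].
  apply: ex_derive. apply: dF. lra.
have [c cin eq] := MVT lt1 dF' cF.
move: cin; rewrite in_itv /= => /andP[c1 ct].
have hc := @ln_ge_1m c (lt_trans ltr01 c1).
move: eq; rewrite !FE ln1 => eq.
have : 0 <= (ln c - 1 + c^-1) * (t - 1) by apply: mulr_ge0; lra.
lra.
Qed.

Lemma logmean_pq (p q : R) : 0 < q -> q <= p -> 2 * (p - q) <= (p + q) * (ln p - ln q).
Proof.
move=> q0 qp.
have p0 : 0 < p by lra.
have t1 : 1 <= p / q by rewrite ler_pdivlMr // mul1r.
have := logmean_aux (p / q) t1.
rewrite ln_div ?posrE //.
move=> h.
have := ler_pM2r q0; move=> e.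
have : 2 * (p / q - 1) * q <= (p / q + 1) * (ln p - ln q) * q.
  by rewrite ler_pM2r.
have -> : 2 * (p / q - 1) * q = 2 * (p - q) by field; rewrite gt_eqF.
have -> : (p / q + 1) * (ln p - ln q) * q = (p + q) * (ln p - ln q) by field; rewrite gt_eqF.
done.
Qed.

Lemma edge_ineq_le (a b : R) : 0 < a -> 0 < b -> b <= a ->
  4 * (Num.sqrt a - Num.sqrt b) ^+ 2 <= (ln a - ln b) * (a - b).
Proof.
move=> a0 b0 ab.
set p := Num.sqrt a. set q := Num.sqrt b.
have q0 : 0 < q by rewrite /q sqrtr_gt0.
have qp : q <= p by rewrite /p /q ler_sqrt // ltW.
have hp : a = p ^+ 2 by rewrite /p sqr_sqrtr // ltW.
have hq : b = q ^+ 2 by rewrite /q sqr_sqrtr // ltW.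
have p0 : 0 < p by lra.
rewrite hp hq !lnXn //.
have := logmean_pq p q q0 qp => h.
have hpq : 0 <= p - q by lra.
have h2 := ler_wpM2r hpq h.
have -> : (ln p *+ 2 - ln q *+ 2) * (p ^+ 2 - q ^+ 2) = 2 * ((p + q) * (ln p - ln q) * (p - q)).
  by ring.
have -> : 4 * (p - q) ^+ 2 = 2 * (2 * (p - q) * (p - q)) by ring.
lra.
Qed.

Lemma edge_ineq (a b : R) : 0 < a -> 0 < b ->
  4 * (Num.sqrt a - Num.sqrt b) ^+ 2 <= (ln a - ln b) * (a - b).
Proof.
move=> a0 b0. have [ba|ab] := lerP b a; first exact: edge_ineq_le a b a0 b0 ba.
have := edge_ineq_le b a b0 a0 (ltW ab).
have -> : (Num.sqrt b - Num.sqrt a) ^+ 2 = (Num.sqrt a - Num.sqrt b) ^+ 2 by rewrite -sqrrN opprB.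
move=> h. lra.
Qed.

Lemma step1 (n v : R) : 0 < n -> 0 <= v ->
  v * (ln v + ln n) <= 2 * Num.sqrt (n * v) * (v - n^-1) - (v - n^-1).
Proof.
move=> n0 v0.
have [->|vn0] := eqVneq v 0.
  rewrite mul0r mulr0 sqrtr0 mulr0 mul0r. have : 0 < n^-1 by rewrite invr_gt0. lra.
have vp : 0 < v by rewrite lt_neqAle eq_sym vn0 v0.
set r := Num.sqrt (n * v).
have nv0 : 0 < n * v by rewrite mulr_gt0.
have r0 : 0 < r by rewrite sqrtr_gt0.
have hr : n * v = r ^+ 2 by rewrite sqr_sqrtr // ltW.
have -> : ln v + ln n = ln (n * v) by rewrite lnM ?posrE // addrC.
rewrite hr lnXn //.
have hl := ln_le_m1 r r0.
have ev : v = r ^+ 2 / n by rewrite -hr; field; rewrite gt_eqF.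
have h1 : v * (ln r *+ 2) <= v * (2 * (r - 1)) by rewrite ler_pM2l // mulr2n; lra.
apply: (le_trans h1).
have e2 : 2 * r * (v - n^-1) - (v - n^-1) - v * (2 * (r - 1)) = (r - 1) ^+ 2 / n.
  rewrite ev. field. by rewrite gt_eqF.
have : 0 <= (r - 1) ^+ 2 / n by rewrite divr_ge0 // ?sqr_ge0 // ltW.
lra.
Qed.

Lemma max0_step (a lam : R) (k : nat) : 0 < lam ->
  Num.max 0 (a - 2 * lam * (k.+1)%:R) <=
  (Num.max 0 (a - 2 * lam * k%:R)) ^+ 2 / (4 * lam) -
  (Num.max 0 (a - 2 * lam * (k.+1)%:R)) ^+ 2 / (4 * lam).
Proof.
move=> l0.
set u := a - 2 * lam * (k.+1)%:R.
have -> : a - 2 * lam * k%:R = u + 2 * lam by rewrite /u -addn1 natrD; ring.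
have l4 : 0 < 4 * lam by lra.
rewrite -mulrBl ler_pdivlMr //.
rewrite !maxEle.
case: (leP 0 u) => u0.
  have -> : (0 <= u + 2 * lam) by lra.
  have -> : (u + 2 * lam) ^+ 2 - u ^+ 2 = (u + lam) * (4 * lam) - u * 0 + 0 by ring.
  have : 0 <= lam * (4 * lam) by rewrite mulr_ge0 // ltW.
  rewrite mulr0 subr0 addr0 mulrDl. lra.
case: ifP => _; last by rewrite !expr0n /= subrr mul0r.
rewrite expr0n /= subr0 mul0r. by rewrite sqr_ge0.
Qed.

Lemma sum_max0_bound (a lam : R) (n : nat) : 0 <= a -> 0 < lam ->
  \sum_(k < n) Num.max 0 (a - 2 * lam * (k.+1)%:R) <= a ^+ 2 / (4 * lam).
Proof.
move=> a0 l0.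
pose G (k : nat) := (Num.max 0 (a - 2 * lam * k%:R)) ^+ 2 / (4 * lam).
have H : forall m, \sum_(k < m) Num.max 0 (a - 2 * lam * (k.+1)%:R) <= G 0%N - G m.
  elim=> [|m IH]; first by rewrite big_ord0 subrr.
  rewrite big_ord_recr /=.
  have := max0_step a lam m l0. rewrite -/(G m) -/(G m.+1). lra.
apply: (le_trans (H n)).
have Gn : 0 <= G n by rewrite /G divr_ge0 ?sqr_ge0 // mulr_ge0 // ltW.
have -> : G 0%N = a ^+ 2 / (4 * lam).
  by rewrite /G mulr0 subr0 maxEle a0.
lra.
Qed.

End RealLemmas.


Section Comb.
Variable N : nat.
Hypothesis hN : (0 < N)%N.

Definition it (k : nat) (y : 'I_N) : 'I_N := iter k (@tsucc N) y.
Definition itb (k : nat) (y : 'I_N) : 'I_N := it (N - k) y.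

Lemma it_val k y : val (it k y) = ((y + k) %% N)%N.
Proof.
elim: k => [|k IH]; first by rewrite addn0 modn_small.
by rewrite /it iterS -/(it k y) /= IH -[X in (X %% N)%N]addn1 modnDml addn1 addnS.
Qed.

Lemma it_inj k : injective (it k).
Proof.
move=> a b /(congr1 val); rewrite !it_val => /eqP; rewrite eqn_modDr.
by rewrite !modn_small // => /eqP h; apply: val_inj.
Qed.

Lemma itS k y : it k.+1 y = tsucc (it k y).
Proof. by []. Qed.

Lemma itN y : it N y = y.
Proof. by apply: val_inj; rewrite it_val modnDr modn_small. Qed.

Lemma itbS k y : (k < N)%N -> tsucc (itb k.+1 y) = itb k y.
Proof. by move=> kN; rewrite /itb -itS subnSK. Qed.

Lemma it_dist1 (x y : 'I_N) : x = it ((x + N - y) %% N) y.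
Proof.
apply: val_inj; rewrite it_val /= modnDmr subnKC; last first.
  by apply: leq_trans (ltnW (ltn_ord y)) (leq_addl _ _).
by rewrite modnDr modn_small.
Qed.

Lemma it_dist2 (x y : 'I_N) : x = itb ((y + N - x) %% N) y.
Proof.
set m2 := ((y + N - x) %% N)%N.
have m2N : (m2 < N)%N by rewrite ltn_pmod.
apply: val_inj; rewrite /itb it_val /=.
rewrite -[LHS](@modn_small x N) //; apply/eqP; rewrite eq_sym.
rewrite -(eqn_modDr m2) -addnA subnK; last exact: ltnW.
rewrite /m2 modnDmr subnKC //.
by apply: leq_trans (ltnW (ltn_ord x)) (leq_addl _ _).
Qed.

Variable R : realType.
Variable s : 'I_N -> R.
Variable lam : R.
Hypothesis lam0 : 0 < lam.
Definition D (z : 'I_N) := s (tsucc z) - s z.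
Definition P (z : 'I_N) (j : nat) := Num.max 0 (`|D z| - 2 * lam * j%:R).

Lemma P_ge0 z j : 0 <= P z j.
Proof. by rewrite /P le_max lexx. Qed.

Lemma P_ge z j : D z - 2 * lam * j%:R <= P z j.
Proof.
rewrite /P le_max; apply/orP; right.
by rewrite lerD2r ler_norm.
Qed.

Lemma Pn_ge z j : - D z - 2 * lam * j%:R <= P z j.
Proof.
rewrite /P le_max; apply/orP; right.
by rewrite lerD2r -normrN ler_norm.
Qed.

Lemma charge_step (m : nat) :
  lam * ((m.+1)%:R + (m.+1)%:R ^+ 2) = lam * (m%:R + m%:R ^+ 2) + 2 * lam * (m.+1)%:R.
Proof. rewrite -addn1 natrD; ring. Qed.

Lemma fwd m y : s (it m y) - s y - lam * (m%:R + m%:R ^+ 2) <= \sum_(k < m) P (it k y) k.+1.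
Proof.
elim: m => [|m IH]; first by rewrite big_ord0 /= expr0n /= addr0 mulr0 !subrr.
rewrite itS big_ord_recr /= charge_step.
have := P_ge (it m y) m.+1. rewrite /D. lra.
Qed.

Lemma bwd m y : (m <= N)%N -> s (itb m y) - s y - lam * (m%:R + m%:R ^+ 2) <= \sum_(k < m) P (itb k.+1 y) k.+1.
Proof.
elim: m => [|m IH] mN.
  by rewrite big_ord0 /itb subn0 itN expr0n /= addr0 mulr0 !subrr.
rewrite big_ord_recr /= charge_step.
have := IH (ltnW mN).
have := Pn_ge (itb m.+1 y) m.+1. rewrite /D itbS //. lra.
Qed.

Lemma sum_widen (F : nat -> R) m : (m <= N)%N -> (forall k, 0 <= F k) ->
  \sum_(k < m) F k <= \sum_(k < N) F k.
Proof.
move=> mN F0. rewrite (big_ord_widen N F mN) [X in _ <= X](bigID (fun k : 'I_N => (k < m)%N)) /=.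
by rewrite lerDl sumr_ge0.
Qed.

Definition bnd (y : 'I_N) := \sum_(k < N) (P (it k y) k.+1 + P (itb k.+1 y) k.+1).

Lemma pt_bound x y : s x - s y - lam * ((tdist x y)%:R + (tdist x y)%:R ^+ 2) <= bnd y.
Proof.
rewrite /tdist.
set m1 := ((x + N - y) %% N)%N. set m2 := ((y + N - x) %% N)%N.
have m1N : (m1 <= N)%N by rewrite ltnW // ltn_pmod.
have m2N : (m2 <= N)%N by rewrite ltnW // ltn_pmod.
rewrite /bnd big_split /=.
case: (leqP m1 m2) => h.

  have := fwd m1 y. rewrite -it_dist1 => h1.
  apply: (le_trans h1).
  have := sum_widen (fun k => P (it k y) k.+1) m1 m1N (fun k => P_ge0 _ _).
  have : 0 <= \sum_(i < N) P (itb i.+1 y) i.+1 by rewrite sumr_ge0 // => i _; apply: P_ge0.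
  lra.

have := bwd m2 y m2N. rewrite -it_dist2 => h1.
apply: (le_trans h1).
have := sum_widen (fun k => P (itb k.+1 y) k.+1) m2 m2N (fun k => P_ge0 _ _).
have : 0 <= \sum_(i < N) P (it i y) i.+1 by rewrite sumr_ge0 // => i _; apply: P_ge0.
lra.
Qed.

Lemma sum_bnd : \sum_(y < N) bnd y <= \sum_(z < N) D z ^+ 2 / (2 * lam).
Proof.
rewrite /bnd exchange_big /=.
have e : forall k : 'I_N, \sum_(y < N) (P (it k y) k.+1 + P (itb k.+1 y) k.+1)
   = 2 * \sum_(z < N) P z k.+1.
  move=> k; rewrite big_split /=.
  have e1 : \sum_(y < N) P (it k y) k.+1 = \sum_(z < N) P z k.+1.
    by rewrite [RHS](reindex_inj (it_inj k)).
  have e2 : \sum_(y < N) P (itb k.+1 y) k.+1 = \sum_(z < N) P z k.+1.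
    by rewrite [RHS](reindex_inj (it_inj (N - k.+1))).
  rewrite e1 e2.
  by rewrite mulr2n mulrDl mul1r.
rewrite (eq_bigr _ (fun k _ => e k)) -mulr_sumr exchange_big /=.
rewrite mulr_sumr; apply: ler_sum => z _.
have := @sum_max0_bound R (`|D z|) lam N (normr_ge0 _) lam0.
rewrite real_normK ?num_real //.
move=> h.
have -> : D z ^+ 2 / (2 * lam) = 2 * (D z ^+ 2 / (4 * lam)) by field; rewrite gt_eqF.
rewrite ler_pM2l //.
Qed.

End Comb.

Lemma tdist0 (N : nat) (hN : (0 < N)%N) (x y : 'I_N) : tdist x y = 0%N -> x = y.
Proof.
rewrite /tdist.
case: leqP => _ h.
  by rewrite (@it_dist1 N x y) h.
by rewrite (@it_dist2 N hN x y) h /itb subn0 itN.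
Qed.

Section Main.
Variable R : realType.
Variable N : nat.
Hypothesis hN : (1 <= N)%N.
Variable nu : 'I_N -> R.
Hypothesis nu0 : forall x, 0 <= nu x.
Hypothesis nu1 : \sum_(x < N) nu x = 1.

Let n : R := N%:R.
Lemma n_gt0 : 0 < n.
Proof. by rewrite /n ltr0n. Qed.

Definition cost (pi : 'I_N -> 'I_N -> R) :=
  \sum_(x < N) \sum_(y < N) pi x y * ((tdist x y)%:R + (tdist x y)%:R ^+ 2).

Definition CS := [set c : R | exists pi, is_coupling nu (@unif R N) pi /\ c = cost pi].

Lemma Wc2E : Wc2 nu (@unif R N) = inf CS.
Proof. by []. Qed.

Lemma CS_ne : CS !=set0.
Proof.
exists (cost (fun x y => nu x / n)); exists (fun x y => nu x / n); split => //.
split; first by move=> x y; rewrite divr_ge0 // ltW // n_gt0.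
split.
  move=> x; rewrite sumr_const card_ord -mulr_natr -/n divfK //.
  by rewrite gt_eqF // n_gt0.
move=> y; rewrite -mulr_suml nu1 mul1r /unif.
done.
Qed.

Lemma cost_ge0 pi : (forall x y, 0 <= pi x y) -> 0 <= cost pi.
Proof.
move=> pi0; apply: sumr_ge0 => x _; apply: sumr_ge0 => y _.
by apply: mulr_ge0 => //; apply: addr_ge0 => //; rewrite exprn_ge0.
Qed.

Lemma W_ge0 : 0 <= inf CS.
Proof.
apply: lb_le_inf; first exact: CS_ne.
by move=> c [pi [[pi0 _] ->]]; apply: cost_ge0.
Qed.


Lemma W_pos (z0 : 'I_N) : nu z0 = 0 -> 2 / n <= inf CS.
Proof.
move=> nz0.
apply: lb_le_inf; first exact: CS_ne.
move=> c [pi [[pi0 [row col]] ->]].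
have pz : forall y, pi z0 y = 0.
  move=> y; have := row z0; rewrite nz0 => h.
  exact: (psumr_eq0P (fun i _ => pi0 z0 i) h).
have h1 : forall x, 2 * pi x z0 <= \sum_(y < N) pi x y * ((tdist x y)%:R + (tdist x y)%:R ^+ 2).
  move=> x.
  rewrite (bigD1 z0) //=.
  have : 0 <= \sum_(y < N | y != z0) pi x y * ((tdist x y)%:R + (tdist x y)%:R ^+ 2).
    apply: sumr_ge0 => y _; apply: mulr_ge0 => //; apply: addr_ge0 => //; rewrite exprn_ge0 //.
  have : 2 * pi x z0 <= pi x z0 * ((tdist x z0)%:R + (tdist x z0)%:R ^+ 2).
    have [->|xz] := eqVneq x z0; first by rewrite pz mulr0 mul0r.
    have d1 : (1 <= tdist x z0)%N.
      rewrite lt0n; apply/eqP => /(@tdist0 N hN) h; by rewrite h eqxx in xz.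
    have : 1 <= (tdist x z0)%:R :> R by rewrite ler1n.
    set d := (tdist x z0)%:R => hd.
    have : 2 <= d + d ^+ 2 by rewrite expr2; nra.
    move=> h2; rewrite mulrC ler_wpM2l //.
  lra.
apply: le_trans (ler_sum _ (fun x _ => h1 x)).
rewrite -mulr_sumr col /unif.
done.
Qed.

Definition sq (x : 'I_N) := Num.sqrt (n * nu x).
Definition T := \sum_(z < N) D N R sq z ^+ 2.

Lemma T_ge0 : 0 <= T.
Proof. by apply: sumr_ge0 => z _; rewrite sqr_ge0. Qed.

Lemma key_pi lam pi : 0 < lam -> is_coupling nu (@unif R N) pi ->
  rel_entropy nu <= 2 * lam * cost pi + T / (lam * n).
Proof.
move=> lam0 [pi0 [row col]].
have e0 : \sum_(x < N) (nu x - n^-1) = 0.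
  rewrite sumrB nu1 sumr_const card_ord -mulr_natr -/n mulVf ?subrr //.
  by rewrite gt_eqF // n_gt0.
have H1 : rel_entropy nu <= 2 * \sum_(x < N) sq x * (nu x - n^-1).
  rewrite /rel_entropy -/n.
  apply: le_trans (ler_sum _ (fun x _ => @step1 R n (nu x) n_gt0 (nu0 x))) _.
  rewrite sumrB e0 subr0 mulr_sumr le_eqVlt; apply/orP; left; apply/eqP.
  by apply: eq_bigr => x _; rewrite mulrA.
have H2 : \sum_(x < N) sq x * (nu x - n^-1) = \sum_(x < N) \sum_(y < N) pi x y * (sq x - sq y).
  have a : \sum_(x < N) \sum_(y < N) pi x y * (sq x - sq y) =
     \sum_(x < N) \sum_(y < N) pi x y * sq x - \sum_(x < N) \sum_(y < N) pi x y * sq y.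
    rewrite -sumrB; apply: eq_bigr => x _; rewrite -sumrB; apply: eq_bigr => y _.
    by rewrite mulrBr.
  have b : \sum_(x < N) \sum_(y < N) pi x y * sq x = \sum_(x < N) sq x * nu x.
    by apply: eq_bigr => x _; rewrite -mulr_suml row mulrC.
  have c : \sum_(x < N) \sum_(y < N) pi x y * sq y = \sum_(y < N) sq y * n^-1.
    by rewrite exchange_big; apply: eq_bigr => y _; rewrite -mulr_suml col /unif mulrC.
  rewrite a b c -sumrB; apply: eq_bigr => x _; by rewrite mulrBr.
have H3 : \sum_(x < N) \sum_(y < N) pi x y * (sq x - sq y) <=
    lam * cost pi + n^-1 * \sum_(y < N) bnd N R sq lam y.
  have -> : lam * cost pi + n^-1 * \sum_(y < N) bnd N R sq lam y =
     \sum_(x < N) \sum_(y < N) pi x y * (lam * ((tdist x y)%:R + (tdist x y)%:R ^+ 2) + bnd N R sq lam y).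
    have u : lam * cost pi = \sum_(x < N) \sum_(y < N) pi x y * (lam * ((tdist x y)%:R + (tdist x y)%:R ^+ 2)).
      rewrite /cost mulr_sumr; apply: eq_bigr => x _; rewrite mulr_sumr; apply: eq_bigr => y _.
      by rewrite mulrCA.
    have v : n^-1 * \sum_(y < N) bnd N R sq lam y = \sum_(x < N) \sum_(y < N) pi x y * bnd N R sq lam y.
      rewrite [RHS]exchange_big [LHS]mulr_sumr; apply: eq_bigr => y _ /=.
      by rewrite -mulr_suml col /unif mulrC.
    rewrite u v -big_split; apply: eq_bigr => x _; rewrite -big_split; apply: eq_bigr => y _.
    by rewrite [RHS]mulrDr.
  apply: ler_sum => x _; apply: ler_sum => y _; apply: ler_wpM2l => //.
  have := @pt_bound N hN R sq lam x y. lra.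
have H4 : \sum_(y < N) bnd N R sq lam y <= T / (2 * lam).
  by rewrite /T mulr_suml; apply: sum_bnd.
have H5 : n^-1 * \sum_(y < N) bnd N R sq lam y <= n^-1 * (T / (2 * lam)).
  by rewrite ler_wpM2l // invr_ge0 ltW // n_gt0.
have -> : T / (lam * n) = 2 * (n^-1 * (T / (2 * lam))).
  by field; rewrite ?gt_eqF // n_gt0.
rewrite H2 in H1. lra.
Qed.

Lemma key lam : 0 < lam -> rel_entropy nu <= 2 * lam * inf CS + T / (lam * n).
Proof.
move=> lam0.
have l2 : 0 < 2 * lam by rewrite mulr_gt0.
have : (rel_entropy nu - T / (lam * n)) / (2 * lam) <= inf CS.
  apply: lb_le_inf; first exact: CS_ne.
  move=> c [pi [hpi ->]].
  rewrite ler_pdivrMr //.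
  have := @key_pi lam pi lam0 hpi. lra.
rewrite ler_pdivrMr //. lra.
Qed.

Lemma fisher_lb : (forall z, (nu z == 0) = (nu (tsucc z) == 0)) ->
  4 * T / n <= \sum_(z < N) (ln (nu (tsucc z)) - ln (nu z)) * (nu (tsucc z) - nu z).
Proof.
move=> Hf.
rewrite /T mulr_sumr mulr_suml; apply: ler_sum => z _.
have nn : 0 <= n by rewrite ltW // n_gt0.
rewrite /D /sq !sqrtrM //.
have -> : 4 * (Num.sqrt n * Num.sqrt (nu (tsucc z)) - Num.sqrt n * Num.sqrt (nu z)) ^+ 2 / n
   = 4 * (Num.sqrt (nu (tsucc z)) - Num.sqrt (nu z)) ^+ 2.
  rewrite -mulrBr exprMn sqr_sqrtr //.
  field. by rewrite gt_eqF // n_gt0.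
have [e|ne] := eqVneq (nu z) 0.
  have e' : nu (tsucc z) = 0 by apply/eqP; rewrite -Hf e.
  rewrite e e' !subrr expr0n /= mulr0 mul0r //.
have ne' : nu (tsucc z) != 0 by rewrite -Hf.
apply: edge_ineq; by rewrite lt_neqAle eq_sym ?ne ?ne' nu0.
Qed.
End Main.

Lemma final_real (R : realType) (H W I A : R) : 0 <= W -> 0 <= A -> 4 * A <= I ->
  (forall lam, 0 < lam -> H <= 2 * lam * W + A / lam) ->
  H <= Num.sqrt 2 * Num.sqrt W * Num.sqrt I.
Proof.
move=> W0 A0 AI key.
have I0 : 0 <= I by lra.
have [Hle|Hgt] := lerP H 0.
  apply: le_trans Hle _; by rewrite !mulr_ge0 // sqrtr_ge0.
have Wp : 0 < W.
  rewrite lt_neqAle W0 andbT; apply/eqP => We.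
  have l0 : 0 < (A + 1) / H by rewrite divr_gt0 //; lra.
  have := key _ l0; rewrite -We mulr0 add0r.
  have -> : A / ((A + 1) / H) = A * H / (A + 1) by field; apply/andP; split; rewrite gt_eqF //; lra.
  rewrite ler_pdivlMr; last by lra.
  nra.
have l0 : 0 < H / (4 * W) by rewrite divr_gt0 // mulr_gt0.
have := key _ l0.
have -> : 2 * (H / (4 * W)) * W = H / 2 by field; rewrite gt_eqF.
have -> : A / (H / (4 * W)) = 4 * A * W / H by field; apply/andP; split; rewrite gt_eqF.
move=> h.
have h2 : H ^+ 2 <= 2 * W * I.
  have : H - H / 2 <= 4 * A * W / H by lra.
  rewrite ler_pdivlMr // => h3.
  have : 4 * A * W <= I * W by rewrite ler_pM2r //.
  rewrite expr2. nra.
have := h2; rewrite -ler_sqrt ?mulr_ge0 // sqrtr_sqr ger0_norm; last exact: ltW.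
by rewrite !sqrtrM // ?mulr_ge0.
Qed.

Theorem mainTheorem2 (R : realType) (N : nat) (hN : (1 <= N)%N)
  (nu : 'I_N -> R) (hnu : is_prob nu) :
  ((rel_entropy nu)%:E <=
     ((Num.sqrt 2 * Wc nu (@unif R N))%:E * sqrte (fisher nu)))%E.
Proof.
case: hnu => nu0 nu1.
rewrite /Wc (Wc2E R N nu).
have W0 := @W_ge0 R N hN nu nu0 nu1.
rewrite /fisher; case: ifP => hex.
  have [z0 hz0] : exists z0, nu z0 = 0.
    move/existsP: hex => [x hx].
    have [e|ne] := eqVneq (nu x) 0; first by exists x.
    exists (tsucc x); apply/eqP; move: hx; rewrite (negbTE ne) /=. by case: (nu (tsucc x) == 0).
  have h2 := @W_pos R N hN nu nu0 nu1 z0 hz0.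
  have n0 := @n_gt0 R N hN.
  have Wp : 0 < inf (CS R N nu) by apply: lt_le_trans h2; rewrite divr_gt0.
  rewrite /= gt0_muley ?leey // lte_fin mulr_gt0 // sqrtr_gt0 //.
have Hf : forall z, (nu z == 0) = (nu (tsucc z) == 0).
  move=> z; move/negbT: hex; rewrite negb_exists => /forallP /(_ z).
  by rewrite negbK => /eqP.
rewrite /= -EFinM lee_fin.
apply: (@final_real R _ _ _ (T R N nu / N%:R) W0).
- by rewrite divr_ge0 ?(T_ge0 R N nu) // ler0n.
- have := @fisher_lb R N hN nu nu0 Hf. by rewrite mulrA.
- move=> lam l0. have := @key R N hN nu nu0 nu1 lam l0. by rewrite invfM [lam^-1 * _]mulrC mulrA.
Qed.
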